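(* Let $(\mathcal{C},\wedge,S)$ be a braided monoidal semiadditive category and $E$ a clopen idempotent. Then $E$ is a retract of $S$. If a complement $S/E$ of $E$ exists, then $S/E$ is also a clopen idempotent, so $E$ and $S/E$ are complementary clopen idempotents. In that case, for all objects $X,Y$ the natural map $\mathcal{C}(X,Y)\to\mathcal{C}(E\wedge X,E\wedge Y)\times\mathcal{C}(S/E\wedge X,S/E\wedge Y)$ is a bijection, so $\mathcal{C}$ splits as the product of its full subcategories of $E$-stable and $E$-torsion objects; in particular an object is $E$-stable iff it is $S/E$-torsion, and vice versa.
   Context: Braided monoidal semiadditive category: braided monoidal category with finite biproducts preserved by $\wedge$ in each variable. A clopen idempotent is $E$ with $r:S\to E$, $i:E\to S$ such that $ri=\mathrm{id}_E$ and $ir\wedge\mathrm{id}_E=\mathrm{id}_E$. A complement of a retract $E$ of $S$ is a retract $S/E$ such that $S\cong E\oplus S/E$ via the given retraction data. $X$ is $E$-stable if $r\wedge\mathrm{id}_X:X\to E\wedge X$ is an isomorphism, and $E$-torsion if $E\wedge X\cong 0$. *)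

(* Defs.v *)
Record Category := {
  ob :> Type;
  hom : ob -> ob -> Type;
  idm : forall A, hom A A;
  comp : forall A B C, hom B C -> hom A B -> hom A C;
  comp_idl : forall A B (f : hom A B), comp _ _ _ (idm B) f = f;
  comp_idr : forall A B (f : hom A B), comp _ _ _ f (idm A) = f;
  comp_assoc : forall A B C D (h : hom C D) (g : hom B C) (f : hom A B),
      comp _ _ _ h (comp _ _ _ g f) = comp _ _ _ (comp _ _ _ h g) f
}.
Arguments hom {c} A B.
Arguments idm {c} A.
Arguments comp {c A B C} g f.

Declare Scope cat_scope.
Open Scope cat_scope.
Notation "g ∘ f" := (comp g f) (at level 40, left associativity) : cat_scope.

Definition is_iso {C : Category} {A B : C} (f : hom A B) : Prop :=
  exists g : hom B A, g ∘ f = idm A /\ f ∘ g = idm B.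

Definition isomorphic {C : Category} (A B : C) : Prop :=
  exists f : hom A B, is_iso f.

Record Semiadditive (C : Category) := {
  zerom : forall A B : C, hom A B;
  addm : forall A B : C, hom A B -> hom A B -> hom A B;
  addmA : forall A B (f g h : hom A B),
      addm _ _ f (addm _ _ g h) = addm _ _ (addm _ _ f g) h;
  addmC : forall A B (f g : hom A B), addm _ _ f g = addm _ _ g f;
  add0m : forall A B (f : hom A B), addm _ _ (zerom A B) f = f;
  comp_addl : forall A B D (g g' : hom B D) (f : hom A B),
      (addm _ _ g g') ∘ f = addm _ _ (g ∘ f) (g' ∘ f);
  comp_addr : forall A B D (g : hom B D) (f f' : hom A B),
      g ∘ (addm _ _ f f') = addm _ _ (g ∘ f) (g ∘ f');
  comp_0l : forall A B D (f : hom A B), zerom B D ∘ f = zerom A D;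
  comp_0r : forall A B D (g : hom B D), g ∘ zerom A B = zerom A D;
  zob : C;
  zob_id : idm zob = zerom zob zob;
  bip : C -> C -> C;
  bp1 : forall A B, hom (bip A B) A;
  bp2 : forall A B, hom (bip A B) B;
  bi1 : forall A B, hom A (bip A B);
  bi2 : forall A B, hom B (bip A B);
  bp1i1 : forall A B, bp1 A B ∘ bi1 A B = idm A;
  bp2i2 : forall A B, bp2 A B ∘ bi2 A B = idm B;
  bp1i2 : forall A B, bp1 A B ∘ bi2 A B = zerom B A;
  bp2i1 : forall A B, bp2 A B ∘ bi1 A B = zerom A B;
  bip_sum : forall A B,
      addm _ _ (bi1 A B ∘ bp1 A B) (bi2 A B ∘ bp2 A B) = idm (bip A B)
}.
Arguments zerom {C s} A B.
Arguments addm {C s A B} f g.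
Arguments zob {C} s.
Arguments bip {C} s A B.

Record BraidedMonoidal (C : Category) := {
  tens : C -> C -> C;
  tensm : forall A A' B B', hom A A' -> hom B B' -> hom (tens A B) (tens A' B');
  tensm_id : forall A B, tensm _ _ _ _ (idm A) (idm B) = idm (tens A B);
  tensm_comp : forall A A' A'' B B' B'' (f : hom A A') (g : hom A' A'')
      (f' : hom B B') (g' : hom B' B''),
      tensm _ _ _ _ (g ∘ f) (g' ∘ f')
      = tensm _ _ _ _ g g' ∘ tensm _ _ _ _ f f';
  unit : C;
  asc : forall A B D, hom (tens (tens A B) D) (tens A (tens B D));
  ascinv : forall A B D, hom (tens A (tens B D)) (tens (tens A B) D);
  asc_inv1 : forall A B D, ascinv A B D ∘ asc A B D = idm _;
  asc_inv2 : forall A B D, asc A B D ∘ ascinv A B D = idm _;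
  asc_nat : forall A A' B B' D D' (f : hom A A') (g : hom B B') (h : hom D D'),
      asc A' B' D' ∘ tensm _ _ _ _ (tensm _ _ _ _ f g) h
      = tensm _ _ _ _ f (tensm _ _ _ _ g h) ∘ asc A B D;
  lu : forall A, hom (tens unit A) A;
  lu_iso : forall A, is_iso (lu A);
  lu_nat : forall A A' (f : hom A A'),
      lu A' ∘ tensm _ _ _ _ (idm unit) f = f ∘ lu A;
  ru : forall A, hom (tens A unit) A;
  ru_iso : forall A, is_iso (ru A);
  ru_nat : forall A A' (f : hom A A'),
      ru A' ∘ tensm _ _ _ _ f (idm unit) = f ∘ ru A;
  pentagon : forall A B D F,
      tensm _ _ _ _ (idm A) (asc B D F) ∘ asc A (tens B D) F
        ∘ tensm _ _ _ _ (asc A B D) (idm F)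
      = asc A B (tens D F) ∘ asc (tens A B) D F;
  triangle : forall A B,
      tensm _ _ _ _ (idm A) (lu B) ∘ asc A unit B
      = tensm _ _ _ _ (ru A) (idm B);
  br : forall A B, hom (tens A B) (tens B A);
  br_iso : forall A B, is_iso (br A B);
  br_nat : forall A A' B B' (f : hom A A') (g : hom B B'),
      br A' B' ∘ tensm _ _ _ _ f g = tensm _ _ _ _ g f ∘ br A B;
  hexagon1 : forall A B D,
      asc B D A ∘ br A (tens B D) ∘ asc A B D
      = tensm _ _ _ _ (idm B) (br A D) ∘ asc B A D
          ∘ tensm _ _ _ _ (br A B) (idm D);
  hexagon2 : forall A B D,
      ascinv D A B ∘ br (tens A B) D ∘ ascinv A B D
      = tensm _ _ _ _ (br A D) (idm B) ∘ ascinv A D B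
          ∘ tensm _ _ _ _ (idm A) (br B D)
}.
Arguments tens {C} b A B.
Arguments tensm {C b A A' B B'} f g.
Arguments unit {C} b.

(** * Braided monoidal semiadditive category: the tensor product preserves
    finite biproducts in each variable, i.e. it is additive in each
    variable. *)
Record BMSCat := {
  bcat :> Category;
  bsa : Semiadditive bcat;
  bmon : BraidedMonoidal bcat;
  tens_addl : forall (A A' B B' : bcat) (f f' : hom A A') (g : hom B B'),
      tensm (b := bmon) (addm (s := bsa) f f') g
      = addm (s := bsa) (tensm (b := bmon) f g) (tensm (b := bmon) f' g);
  tens_0l : forall (A A' B B' : bcat) (g : hom B B'),
      tensm (b := bmon) (zerom (s := bsa) A A') g
      = zerom (s := bsa) (tens bmon A B) (tens bmon A' B');
  tens_addr : forall (A A' B B' : bcat) (f : hom A A') (g g' : hom B B'),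
      tensm (b := bmon) f (addm (s := bsa) g g')
      = addm (s := bsa) (tensm (b := bmon) f g) (tensm (b := bmon) f g');
  tens_0r : forall (A A' B B' : bcat) (f : hom A A'),
      tensm (b := bmon) f (zerom (s := bsa) B B')
      = zerom (s := bsa) (tens bmon A B) (tens bmon A' B')
}.

Notation "X ⊗[ C ] Y" := (tens (bmon C) X Y) (at level 35) : cat_scope.
Definition tensor {C : BMSCat} {A A' B B' : C} (f : hom A A') (g : hom B B')
  : hom (tens (bmon C) A B) (tens (bmon C) A' B') := tensm (b := bmon C) f g.
Definition zero {C : BMSCat} (A B : C) : hom A B := zerom (s := bsa C) A B.
Definition plus {C : BMSCat} {A B : C} (f g : hom A B) : hom A B :=
  addm (s := bsa C) f g.
Definition Sunit (C : BMSCat) : C := unit (bmon C).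
Definition zero_obj (C : BMSCat) : C := zob (bsa C).
Definition biprod {C : BMSCat} (A B : C) : C := bip (bsa C) A B.

Definition retract_of_unit {C : BMSCat} (E : C)
    (r : hom (Sunit C) E) (i : hom E (Sunit C)) : Prop :=
  r ∘ i = idm E.

Definition clopen_idempotent {C : BMSCat} (E : C)
    (r : hom (Sunit C) E) (i : hom E (Sunit C)) : Prop :=
  r ∘ i = idm E /\ tensor (i ∘ r) (idm E) = idm (tens (bmon C) (Sunit C) E).

(** A complement [F = S/E] of the retract [(E, r, i)]: a retract [(F, r', i')]
    of [S] such that [S ≅ E ⊕ F] via the given retraction data, i.e. the
    data [(i, i', r, r')] exhibit [S] as a biproduct of [E] and [F]. *)
Definition complement {C : BMSCat} (E : C)
    (r : hom (Sunit C) E) (i : hom E (Sunit C))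
    (F : C) (r' : hom (Sunit C) F) (i' : hom F (Sunit C)) : Prop :=
  r' ∘ i' = idm F /\ r ∘ i' = zero F E /\ r' ∘ i = zero E F /\
  plus (i ∘ r) (i' ∘ r') = idm (Sunit C).

(** [X] is [E]-stable: [r ∧ id_X : S ∧ X -> E ∧ X] is an isomorphism
    (with [X] identified with [S ∧ X] via the left unitor). *)
Definition E_stable {C : BMSCat} (E : C) (r : hom (Sunit C) E) (X : C) : Prop :=
  is_iso (tensor r (idm X)).

Definition E_torsion {C : BMSCat} (E : C) (X : C) : Prop :=
  isomorphic (tens (bmon C) E X) (zero_obj C).

Definition bijective_map {A B : Type} (f : A -> B) : Prop :=
  (forall x y, f x = f y -> x = y) /\ (forall b, exists a, f a = b).

(* Main.v *)
Require Import Defs.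
From Stdlib Require Import ClassicalEpsilon.
From mathcomp Require Import ssreflect ssrfun.

Section Base.
Variable C : BMSCat.
Local Notation "f ⊠ g" := (tensor (C:=C) f g) (at level 34).
Local Notation "f ⊕ g" := (plus (C:=C) f g) (at level 50, left associativity).
Local Notation S := (Sunit C).
Local Notation T A B := (tens (bmon C) A B).

Lemma tc {A A' A'' B B' B'' : C} (f : hom A A') (g : hom A' A'') (f' : hom B B') (g' : hom B' B'') :
  (g ∘ f) ⊠ (g' ∘ f') = (g ⊠ g') ∘ (f ⊠ f').
Proof. exact: (tensm_comp _ (bmon C)). Qed.
Lemma tid (A B : C) : idm A ⊠ idm B = idm (T A B).
Proof. exact: (tensm_id _ (bmon C)). Qed.
Lemma tDl {A A' B B' : C} (f f' : hom A A') (g : hom B B') : (f ⊕ f') ⊠ g = f ⊠ g ⊕ f' ⊠ g.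
Proof. exact: tens_addl. Qed.
Lemma tDr {A A' B B' : C} (f : hom A A') (g g' : hom B B') : f ⊠ (g ⊕ g') = f ⊠ g ⊕ f ⊠ g'.
Proof. exact: tens_addr. Qed.
Lemma t0l {A A' B B' : C} (g : hom B B') : zero A A' ⊠ g = zero (T A B) (T A' B').
Proof. exact: tens_0l. Qed.
Lemma t0r {A A' B B' : C} (f : hom A A') : f ⊠ zero B B' = zero (T A B) (T A' B').
Proof. exact: tens_0r. Qed.
Lemma cDl {A B D : C} (g g' : hom B D) (f : hom A B) : (g ⊕ g') ∘ f = g ∘ f ⊕ g' ∘ f.
Proof. exact: comp_addl. Qed.
Lemma cDr {A B D : C} (g : hom B D) (f f' : hom A B) : g ∘ (f ⊕ f') = g ∘ f ⊕ g ∘ f'.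
Proof. exact: comp_addr. Qed.
Lemma c0l {A B D : C} (f : hom A B) : zero B D ∘ f = zero A D.
Proof. exact: comp_0l. Qed.
Lemma c0r {A B D : C} (g : hom B D) : g ∘ zero A B = zero A D.
Proof. exact: comp_0r. Qed.
Lemma pA {A B : C} (f g h : hom A B) : f ⊕ (g ⊕ h) = f ⊕ g ⊕ h.
Proof. exact: addmA. Qed.
Lemma pC {A B : C} (f g : hom A B) : f ⊕ g = g ⊕ f.
Proof. exact: addmC. Qed.
Lemma p0l {A B : C} (f : hom A B) : zero A B ⊕ f = f.
Proof. exact: add0m. Qed.
Lemma p0r {A B : C} (f : hom A B) : f ⊕ zero A B = f.
Proof. by rewrite pC p0l. Qed.
Lemma cA {A B D F : C} (h : hom D F) (g : hom B D) (f : hom A B) : h ∘ (g ∘ f) = h ∘ g ∘ f.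
Proof. exact: comp_assoc. Qed.
Lemma ci1 {A B : C} (f : hom A B) : idm B ∘ f = f.
Proof. exact: comp_idl. Qed.
Lemma ci2 {A B : C} (f : hom A B) : f ∘ idm A = f.
Proof. exact: comp_idr. Qed.

Definition LU (A : C) : hom (T S A) A := lu _ (bmon C) A.
Definition LUi (A : C) : hom A (T S A) :=
  proj1_sig (constructive_indefinite_description _ (lu_iso _ (bmon C) A)).
Lemma LUiK (A : C) : LUi A ∘ LU A = idm _.
Proof. exact: (proj1 (proj2_sig (constructive_indefinite_description _ (lu_iso _ (bmon C) A)))). Qed.
Lemma LUK (A : C) : LU A ∘ LUi A = idm _.
Proof. exact: (proj2 (proj2_sig (constructive_indefinite_description _ (lu_iso _ (bmon C) A)))). Qed.
Definition RU (A : C) : hom (T A S) A := ru _ (bmon C) A.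
Definition RUi (A : C) : hom A (T A S) :=
  proj1_sig (constructive_indefinite_description _ (ru_iso _ (bmon C) A)).
Lemma RUiK (A : C) : RUi A ∘ RU A = idm _.
Proof. exact: (proj1 (proj2_sig (constructive_indefinite_description _ (ru_iso _ (bmon C) A)))). Qed.
Lemma RUK (A : C) : RU A ∘ RUi A = idm _.
Proof. exact: (proj2 (proj2_sig (constructive_indefinite_description _ (ru_iso _ (bmon C) A)))). Qed.
Definition BR (A B : C) : hom (T A B) (T B A) := br _ (bmon C) A B.
Definition BRi (A B : C) : hom (T B A) (T A B) :=
  proj1_sig (constructive_indefinite_description _ (br_iso _ (bmon C) A B)).
Lemma BRK (A B : C) : BR A B ∘ BRi A B = idm _.
Proof. exact: (proj2 (proj2_sig (constructive_indefinite_description _ (br_iso _ (bmon C) A B)))). Qed.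
Definition AS (A B D : C) : hom (T (T A B) D) (T A (T B D)) := asc _ (bmon C) A B D.
Definition ASi (A B D : C) : hom (T A (T B D)) (T (T A B) D) := ascinv _ (bmon C) A B D.
Lemma ASiK (A B D : C) : ASi A B D ∘ AS A B D = idm _.
Proof. exact: asc_inv1. Qed.
Lemma ASK (A B D : C) : AS A B D ∘ ASi A B D = idm _.
Proof. exact: asc_inv2. Qed.
Lemma asn {A A' B B' D D' : C} (f : hom A A') (g : hom B B') (h : hom D D') :
  AS A' B' D' ∘ ((f ⊠ g) ⊠ h) = (f ⊠ (g ⊠ h)) ∘ AS A B D.
Proof. exact: asc_nat. Qed.
Lemma lun {A A' : C} (f : hom A A') : LU A' ∘ (idm S ⊠ f) = f ∘ LU A.
Proof. exact: lu_nat. Qed.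
Lemma run {A A' : C} (f : hom A A') : RU A' ∘ (f ⊠ idm S) = f ∘ RU A.
Proof. exact: ru_nat. Qed.
Lemma brn {A A' B B' : C} (f : hom A A') (g : hom B B') : BR A' B' ∘ (f ⊠ g) = (g ⊠ f) ∘ BR A B.
Proof. exact: br_nat. Qed.
Lemma tri (A B : C) : (idm A ⊠ LU B) ∘ AS A S B = RU A ⊠ idm B.
Proof. exact: triangle. Qed.
Lemma pent (A B D F : C) :
  (idm A ⊠ AS B D F) ∘ AS A (T B D) F ∘ (AS A B D ⊠ idm F) = AS A B (T D F) ∘ AS (T A B) D F.
Proof. exact: pentagon. Qed.

Lemma tcl {A B B' B'' : C} (f : hom B B') (g : hom B' B'') :
  idm A ⊠ (g ∘ f) = (idm A ⊠ g) ∘ (idm A ⊠ f).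
Proof. by rewrite -tc ci1. Qed.
Lemma tcr {A A' A'' B : C} (f : hom A A') (g : hom A' A'') :
  (g ∘ f) ⊠ idm B = (g ⊠ idm B) ∘ (f ⊠ idm B).
Proof. by rewrite -tc ci1. Qed.
Lemma lu_conj {A A' : C} (f : hom A A') : f = LU A' ∘ (idm S ⊠ f) ∘ LUi A.
Proof. by rewrite lun -cA LUK ci2. Qed.
Lemma lu_conj2 {A A' : C} (f : hom A A') : idm S ⊠ f = LUi A' ∘ f ∘ LU A.
Proof. by rewrite -cA -lun cA LUiK ci1. Qed.
Lemma lui_nat {A A' : C} (f : hom A A') : (idm S ⊠ f) ∘ LUi A = LUi A' ∘ f.
Proof. by rewrite lu_conj2 -!cA LUK ci2. Qed.
Lemma ru_conj {A A' : C} (f : hom A A') : f = RU A' ∘ (f ⊠ idm S) ∘ RUi A.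
Proof. by rewrite run -cA RUK ci2. Qed.
Lemma cancel_S {A B : C} (f g : hom A B) : idm S ⊠ f = idm S ⊠ g -> f = g.
Proof. move=> H; by rewrite [LHS]lu_conj [RHS]lu_conj H. Qed.

Lemma lu_asc_Z (Z X Y : C) :
  idm Z ⊠ (LU (T X Y) ∘ AS S X Y) = idm Z ⊠ (LU X ⊠ idm Y).
Proof.
  set Q := AS Z (T S X) Y ∘ (AS Z S X ⊠ idm Y).
  set Q' := (ASi Z S X ⊠ idm Y) ∘ ASi Z (T S X) Y.
  have HQ : Q ∘ Q' = idm _.
    by rewrite /Q /Q' cA -(cA (AS _ _ _)) -tcr ASK tid ci2 ASK.
  suff H : (idm Z ⊠ (LU (T X Y) ∘ AS S X Y)) ∘ Q = (idm Z ⊠ (LU X ⊠ idm Y)) ∘ Q.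
    by rewrite -[LHS]ci2 -HQ cA H -cA HQ ci2.
  rewrite /Q tcl !cA -!(cA (idm Z ⊠ LU _)) pent.
  rewrite cA tri -(tid X Y) -asn -tri tcr.
  rewrite -asn -cA -tcr. done.
Qed.

Lemma lu_asc (X Y : C) : LU (T X Y) ∘ AS S X Y = LU X ⊠ idm Y.
Proof. apply: cancel_S; exact: lu_asc_Z. Qed.

Lemma lu_SS : LU S = RU S.
Proof.
  have h1 : forall Y : C, LU (T S Y) = idm S ⊠ LU Y.
    by move=> Y; rewrite lu_conj2 LUiK ci1.
  have h2 : forall Y : C, LU S ⊠ idm Y = RU S ⊠ idm Y.
    by move=> Y; rewrite -lu_asc -tri h1.
  by rewrite [LHS]ru_conj h2 -ru_conj.
Qed.
Lemma tsplit1 {A A' B B' : C} (f : hom A A') (g : hom B B') : f ⊠ g = (f ⊠ idm B') ∘ (idm A ⊠ g).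
Proof. by rewrite -tc ci1 ci2. Qed.
Lemma tsplit2 {A A' B B' : C} (f : hom A A') (g : hom B B') : f ⊠ g = (idm A' ⊠ g) ∘ (f ⊠ idm B).
Proof. by rewrite -tc ci1 ci2. Qed.

Section KK.
Variables (E : C) (r : hom S E) (i : hom E S).
Hypothesis hri : r ∘ i = idm E.
Let phi := RU E ∘ (idm E ⊠ i).
Let psi := (idm E ⊠ r) ∘ RUi E.
Let psi' := (r ⊠ idm E) ∘ LUi E.

Lemma L1 : phi ∘ psi' = idm E.
Proof.
  rewrite /phi /psi' cA -(cA (RU E)) -tsplit2 tsplit1 cA run -!cA lui_nat.
  by rewrite -lu_SS (cA (LU S)) LUK ci1 hri.
Qed.
Lemma L2 : psi ∘ phi = idm _.
Proof.
  by rewrite /psi /phi cA -(cA _ (RUi E)) RUiK ci2 -tcl hri tid.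
Qed.
Lemma L3 : psi = psi'.
Proof. by rewrite -[LHS]ci2 -L1 cA L2 ci1. Qed.

Lemma L4 (Y : C) : idm E ⊠ (LU Y ∘ (i ⊠ idm Y)) = (phi ⊠ idm Y) ∘ ASi E E Y.
Proof.
  by rewrite /phi tcr -tri -(cA (idm E ⊠ LU Y)) asn cA -(cA _ (AS E E Y)) ASK ci2 -tcl.
Qed.
Lemma L5a (X : C) : AS E S X ∘ (RUi E ⊠ idm X) = idm E ⊠ LUi X.
Proof.
  rewrite -[LHS]ci1 -(tid E (T S X)) -(LUiK X) tcl -cA (cA (idm E ⊠ LU X)) tri -tcr RUK tid.
  by rewrite ci2.
Qed.
Lemma L5 (X : C) : idm E ⊠ ((r ⊠ idm X) ∘ LUi X) = AS E E X ∘ (psi ⊠ idm X).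
Proof.
  by rewrite /psi tcr cA asn -cA L5a -tcl.
Qed.
Lemma L6a (Z : C) : AS S E Z ∘ (LUi E ⊠ idm Z) = LUi (T E Z).
Proof.
  rewrite -[LHS]ci1 -(LUiK (T E Z)) -!cA (cA (LU _)) lu_asc -tcr LUK tid.
  by rewrite ci2.
Qed.
Lemma L6 (Z : C) : AS E E Z ∘ (psi' ⊠ idm Z) = (r ⊠ idm (T E Z)) ∘ LUi (T E Z).
Proof.
  by rewrite /psi' tcr cA asn tid -cA L6a.
Qed.
Lemma L7 (X Y : C) (a : hom (T E X) (T E Y)) :
  (idm E ⊠ a) ∘ ((r ⊠ idm _) ∘ LUi _) = ((r ⊠ idm _) ∘ LUi _) ∘ a.
Proof.
  by rewrite cA -tsplit2 tsplit1 -cA lui_nat cA.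
Qed.

Definition fa {X Y : C} (a : hom (T E X) (T E Y)) : hom X Y :=
  LU Y ∘ (i ⊠ idm Y) ∘ a ∘ (r ⊠ idm X) ∘ LUi X.

Lemma LK (X Y : C) (a : hom (T E X) (T E Y)) : idm E ⊠ fa a = a.
Proof.
  rewrite /fa -(cA _ (r ⊠ idm X)) (tcl ((r ⊠ idm X) ∘ LUi X)) (tcl a) L4 L5 L3 L6 -(cA _ (idm E ⊠ a)) L7 -L6.
  by rewrite !cA -(cA _ (ASi E E Y)) ASiK ci2 -tcr L1 tid ci1.
Qed.
End KK.
Lemma ZZ (E F Y : C) : idm F ⊠ idm E = zero (T F E) (T F E) ->
  idm F ⊠ idm (T E Y) = zero (T F (T E Y)) (T F (T E Y)).
Proof.
  move=> H.
  by rewrite -(tid E Y) -[LHS]ci2 -(ASK F E Y) cA -asn H t0l c0r c0l.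
Qed.

Lemma Zfa (E F : C) (r : hom S E) (i : hom E S) (X Y : C) (a : hom (T E X) (T E Y)) :
  idm F ⊠ idm E = zero (T F E) (T F E) -> idm F ⊠ fa E r i a = zero _ _.
Proof.
  move=> H. rewrite /fa -[a]ci1 !tcl (ZZ _ _ _ H).
  by rewrite ?c0l ?c0r c0l c0l.
Qed.

Lemma TZ (Z : C) : isomorphic Z (zero_obj C) <-> idm Z = zero Z Z.
Proof.
  split.
  - move=> [f [g [h1 h2]]]. rewrite -h1. 
    have -> : f = idm _ ∘ f by rewrite ci1.
    have -> : idm (zero_obj C) = zero _ _ by exact: zob_id.
    by rewrite c0l c0r.
  - move=> H. exists (zero _ _), (zero _ _); split.
    + by rewrite c0r H.
    + rewrite c0r. symmetry. exact: zob_id.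
Qed.
Lemma sandwich {E X Y : C} (r : hom S E) (i : hom E S) (f : hom X Y) :
  (i ⊠ idm Y) ∘ (idm E ⊠ f) ∘ (r ⊠ idm X) = (i ∘ r) ⊠ f.
Proof. by rewrite -tsplit1 -tc ci2. Qed.

Lemma Ddec {E F X Y : C} (r : hom S E) (i : hom E S) (r' : hom S F) (i' : hom F S)
  (hsum : i ∘ r ⊕ i' ∘ r' = idm S) (f : hom X Y) :
  f = LU Y ∘ ((i ⊠ idm Y) ∘ (idm E ⊠ f) ∘ (r ⊠ idm X) ⊕
              (i' ⊠ idm Y) ∘ (idm F ⊠ f) ∘ (r' ⊠ idm X)) ∘ LUi X.
Proof. by rewrite !sandwich -tDl hsum -lu_conj. Qed.

Lemma ST {E F X : C} (r : hom S E) (i : hom E S) (r' : hom S F) (i' : hom F S)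
  (hri : r ∘ i = idm E) (hri' : r ∘ i' = zero F E) (hr'i' : r' ∘ i' = idm F)
  (hsum : i ∘ r ⊕ i' ∘ r' = idm S) :
  is_iso (r ⊠ idm X) <-> idm F ⊠ idm X = zero (T F X) (T F X).
Proof.
  split.
  - move=> [s [h1 h2]].
    have H : i' ⊠ idm X = zero _ _.
      by rewrite -[LHS]ci1 -h1 -cA -tc ci1 hri' t0l c0r.
    by rewrite -hr'i' tcr H c0r.
  - move=> H. exists (i ⊠ idm X); split.
    + rewrite -tc ci1.
      have -> : (i ∘ r) ⊠ idm X = (i ∘ r) ⊠ idm X ⊕ (i' ∘ r') ⊠ idm X.
        by rewrite -[(i' ∘ r') ⊠ _]sandwich H c0r c0l p0r.
      by rewrite -tDl hsum tid.
    + by rewrite -tc ci1 hri tid.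
Qed.
Lemma bip_iso {E F X : C} (r : hom S E) (i : hom E S) (r' : hom S F) (i' : hom F S)
  (hri : r ∘ i = idm E) (hr'i' : r' ∘ i' = idm F) (hri' : r ∘ i' = zero F E)
  (hr'i : r' ∘ i = zero E F) (hsum : i ∘ r ⊕ i' ∘ r' = idm S) :
  isomorphic X (biprod (T E X) (T F X)).
Proof.
  set B1 := bi1 _ (bsa C) (T E X) (T F X).
  set B2 := bi2 _ (bsa C) (T E X) (T F X).
  set P1 := bp1 _ (bsa C) (T E X) (T F X).
  set P2 := bp2 _ (bsa C) (T E X) (T F X).
  have e11 : P1 ∘ B1 = idm _ by exact: bp1i1.
  have e22 : P2 ∘ B2 = idm _ by exact: bp2i2.
  have e12 : P1 ∘ B2 = zero _ _ by exact: bp1i2.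
  have e21 : P2 ∘ B1 = zero _ _ by exact: bp2i1.
  have es : B1 ∘ P1 ⊕ B2 ∘ P2 = idm _ by exact: bip_sum.
  have MN : forall (A B : C) (a : hom S A) (b : hom B S),
      ((a ⊠ idm X) ∘ LUi X) ∘ (LU X ∘ (b ⊠ idm X)) = (a ∘ b) ⊠ idm X.
    move=> A B a b. by rewrite cA -(cA _ (LUi X)) LUiK ci2 -tcr.
  exists (B1 ∘ ((r ⊠ idm X) ∘ LUi X) ⊕ B2 ∘ ((r' ⊠ idm X) ∘ LUi X)).
  exists ((LU X ∘ (i ⊠ idm X)) ∘ P1 ⊕ (LU X ∘ (i' ⊠ idm X)) ∘ P2).
  split.
  - rewrite cDr !cDl -!(cA _ P1) -!(cA _ P2) !(cA P1) !(cA P2) e11 e12 e21 e22 !ci1 !c0l !c0r p0r p0l.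
    by rewrite !cA -!(cA (LU X)) -!tcr -cDr -cDl -tDl hsum tid ci1 LUK.
  - rewrite cDl !cDr !cA -!(cA _ (LUi X)) !LUiK !ci2 -!(cA B1) -!(cA B2) -!tcr.
    rewrite hri hr'i' hri' hr'i !tid !t0l !ci1 !c0l !c0r p0r p0l. exact: es.
Qed.

Lemma main (E : C) (r : hom (Sunit C) E) (i : hom E (Sunit C)) :
  clopen_idempotent E r i ->
  retract_of_unit E r i /\
  (forall (F : C) (r' : hom (Sunit C) F) (i' : hom F (Sunit C)),
     complement E r i F r' i' ->
     clopen_idempotent F r' i' /\
     (forall X Y : C,
        bijective_map (fun f : hom X Y => (tensor (idm E) f, tensor (idm F) f))) /\
     (forall X : C, exists A B : C,
        E_stable E r A /\ E_torsion E B /\ isomorphic X (biprod A B)) /\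
     (forall A B : C, E_stable E r A -> E_torsion E B ->
        (forall f : hom A B, f = zero A B) /\ (forall g : hom B A, g = zero B A)) /\
     (forall X : C, E_stable E r X <-> E_torsion F X) /\
     (forall X : C, E_torsion E X <-> E_stable F r' X)).
Proof.
  move=> [hri hcl]. split; first exact: hri.
  move=> F r' i' [hr'i' [hri' [hr'i hsum]]].
  have hsum' : i' ∘ r' ⊕ i ∘ r = idm S by rewrite pC.
  have h0 : (i' ∘ r') ⊠ idm E = zero _ _.
    rewrite -[LHS]ci2 -hcl -tc ci1 cA -(cA i') hr'i c0r c0l. exact: t0l.
  have FE0 : idm F ⊠ idm E = zero (T F E) (T F E).
    have e : idm F = r' ∘ (i' ∘ r') ∘ i' by rewrite cA hr'i' ci1 hr'i'.
    by rewrite e tcr (tcr (i' ∘ r') r') h0 c0r c0l.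
  have EF0 : idm E ⊠ idm F = zero (T E F) (T E F).
    by rewrite -[LHS]ci2 -(BRK F E) cA -brn FE0 c0r c0l.
  split.
    split; first exact: hr'i'.
    rewrite -(tid S F) -hsum tDl -(sandwich r i (idm F)) EF0 c0r c0l.
    by rewrite p0l.
  split.
    move=> X Y; split.
    - move=> f g [H1 H2].
      by rewrite (Ddec r i r' i' hsum f) (Ddec r i r' i' hsum g) H1 H2.
    - move=> [a b]. exists (fa E r i a ⊕ fa F r' i' b).
      rewrite /= !tDr (LK _ _ _ hri) (LK _ _ _ hr'i') (Zfa _ _ _ _ _ _ _ FE0) (Zfa _ _ _ _ _ _ _ EF0).
      by rewrite p0r p0l.
  split.
    move=> X. exists (T E X), (T F X). split; [|split].
    - apply/(ST r i r' i' hri hri' hr'i' hsum). exact: ZZ _ _ _ FE0.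
    - apply/TZ. rewrite -(tid E (T F X)). exact: ZZ _ _ _ EF0.
    - exact: (bip_iso r i r' i' hri hr'i' hri' hr'i hsum).
  split.
    move=> A B hA hB.
    have hB' : idm E ⊠ idm B = zero _ _ by rewrite tid; apply/TZ.
    have hA' : idm F ⊠ idm A = zero _ _ by apply/(ST r i r' i' hri hri' hr'i' hsum).
    split.
    - move=> f. have z1 : idm E ⊠ f = zero _ _ by rewrite -[f]ci1 tcl hB' c0l.
      have z2 : idm F ⊠ f = zero _ _ by rewrite -[f]ci2 tcl hA' c0r.
      rewrite [LHS](Ddec r i r' i' hsum f) z1 z2 !c0r !c0l p0l. by rewrite c0r c0l.
    - move=> g. have z1 : idm E ⊠ g = zero _ _ by rewrite -[g]ci2 tcl hB' c0r.
      have z2 : idm F ⊠ g = zero _ _ by rewrite -[g]ci1 tcl hA' c0l.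
      rewrite [LHS](Ddec r i r' i' hsum g) z1 z2 !c0r !c0l p0l. by rewrite c0r c0l.
  split.
    move=> X. have h := ST r i r' i' hri hri' hr'i' hsum (X:=X). rewrite tid in h.
    split => H.
    - apply/TZ. exact/h.
    - apply/h. exact/TZ.
  move=> X. have h := ST r' i' r i hr'i' hr'i hri hsum' (X:=X). rewrite tid in h.
  split => H.
  - apply/h. exact/TZ.
  - apply/TZ. exact/h.
Qed.
End Base.

Theorem proposition3p17 (C : BMSCat) (E : C)
    (r : hom (Sunit C) E) (i : hom E (Sunit C)) :
  clopen_idempotent E r i ->
  retract_of_unit E r i /\
  (forall (F : C) (r' : hom (Sunit C) F) (i' : hom F (Sunit C)),
     complement E r i F r' i' ->
     (* S/E is a clopen idempotent *)
     clopen_idempotent F r' i' /\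
     (* the natural map C(X,Y) -> C(E∧X,E∧Y) × C(S/E∧X,S/E∧Y) is bijective *)
     (forall X Y : C,
        bijective_map (fun f : hom X Y => (tensor (idm E) f, tensor (idm F) f))) /\
     (* C splits as the product of E-stable and E-torsion objects *)
     (forall X : C, exists A B : C,
        E_stable E r A /\ E_torsion E B /\ isomorphic X (biprod A B)) /\
     (forall A B : C, E_stable E r A -> E_torsion E B ->
        (forall f : hom A B, f = zero A B) /\ (forall g : hom B A, g = zero B A)) /\
     (* E-stable iff S/E-torsion, and vice versa *)
     (forall X : C, E_stable E r X <-> E_torsion F X) /\
     (forall X : C, E_torsion E X <-> E_stable F r' X)).
Proof. exact: main. Qed.
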